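(* $G(x)=\{u\in L : (u,u)=2\}$.
   Context: $\mathbb F$ is a field of characteristic zero and $\mathfrak{sl}_2$ is the Lie algebra of $2\times2$ trace-zero matrices over $\mathbb F$, with trace form $(u,v)=\mathrm{tr}(uv)$. The equitable basis is $x=\begin{pmatrix}1&0\\0&-1\end{pmatrix}$, $y=\begin{pmatrix}-1&2\\0&1\end{pmatrix}$, $z=\begin{pmatrix}-1&0\\-2&1\end{pmatrix}$. Let $x^*=\begin{pmatrix}1&-1\\1&-1\end{pmatrix}$, $y^*=\begin{pmatrix}0&0\\1&0\end{pmatrix}$, $z^*=\begin{pmatrix}0&-1\\0&0\end{pmatrix}$ (these are nilpotent). $G$ is the subgroup of $\mathrm{Aut}_{\mathbb F}(\mathfrak{sl}_2)$ generated by $\exp(\mathrm{ad}\,x^* )$, $\exp(\mathrm{ad}\,y^* )$ and $\exp(\mathrm{ad}\,z^* )$. $G(x)$ is the $G$-orbit of $x$. $L=\mathbb Zx\oplus\mathbb Zy\oplus\mathbb Zz$. *)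

(* Defs.v *)
From HB Require Import structures.
From mathcomp Require Import all_boot all_order all_algebra.
Set Implicit Arguments. Unset Strict Implicit. Unset Printing Implicit Defensive.
Import Order.TTheory GRing.Theory Num.Theory.
Local Open Scope ring_scope.

Section SL2.
Variable F : fieldType.

Definition mx2 (a b c d : F) : 'M[F]_2 :=
  \matrix_(i < 2, j < 2)
    if (i : nat) == 0%N then (if (j : nat) == 0%N then a else b)
    else (if (j : nat) == 0%N then c else d).

Definition eqx : 'M[F]_2 := mx2 1 0 0 (-1).
Definition eqy : 'M[F]_2 := mx2 (-1) 2 0 1.
Definition eqz : 'M[F]_2 := mx2 (-1) 0 (-2) 1.

Definition xs : 'M[F]_2 := mx2 1 (-1) 1 (-1).
Definition ys : 'M[F]_2 := mx2 0 0 1 0.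
Definition zs : 'M[F]_2 := mx2 0 (-1) 0 0.

Definition trform (u v : 'M[F]_2) : F := \tr (u *m v).

Definition ad (n : 'M[F]_2) (u : 'M[F]_2) : 'M[F]_2 := n *m u - u *m n.

(* exp(ad n) for nilpotent n: ad n is nilpotent on the 3-dimensional sl2,
   so (ad n)^3 = 0 and the exponential series is the finite sum below. *)
Definition expad (n : 'M[F]_2) (u : 'M[F]_2) : 'M[F]_2 :=
  \sum_(k < 3) ((factorial k)%:R)^-1 *: iter k (ad n) u.

Definition generator (n : 'M[F]_2) : Prop := n = xs \/ n = ys \/ n = zs.

(* G(x): the orbit of x under the group G generated by the three
   automorphisms exp(ad xs), exp(ad ys), exp(ad zs); i.e. the smallest set
   containing x and closed under each generator and its inverse. *)
Inductive Gorbit : 'M[F]_2 -> Prop :=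
| Gorbit_base : Gorbit eqx
| Gorbit_fwd n u : generator n -> Gorbit u -> Gorbit (expad n u)
| Gorbit_inv n u : generator n -> Gorbit (expad n u) -> Gorbit u.

Definition inL (u : 'M[F]_2) : Prop :=
  exists a b c : int, u = a%:~R *: eqx + b%:~R *: eqy + c%:~R *: eqz.

End SL2.

(* Main.v *)
From Stdlib Require Import ZArith Lia Wf_nat.
Require Import Defs.
From HB Require Import structures.
From mathcomp Require Import all_boot all_order all_algebra.
Import Order.TTheory GRing.Theory Num.Theory.
Local Open Scope ring_scope.
Delimit Scope Z_scope with ZZ.

Definition fZ (z : Z) : int := Posz (Z.to_nat z) - Posz (Z.to_nat (- z)).

Lemma key_int (p n p' n' : nat) :
  (Z.of_nat p - Z.of_nat n = Z.of_nat p' - Z.of_nat n')%ZZ ->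
  (p%:Z - n%:Z = p'%:Z - n'%:Z :> int).
Proof.
move=> H.
have h : (p + n' = p' + n)%N by rewrite -!plusE; lia.
apply/eqP; rewrite subr_eq addrAC eq_sym subr_eq -!PoszD h //.
Qed.

Lemma tn (w : Z) : Z.of_nat (Z.to_nat w) = Z.max 0 w.
Proof. exact: ZifyInst.of_nat_to_nat_eq. Qed.

Lemma fZD x y : fZ (x + y) = fZ x + fZ y.
Proof.
rewrite /fZ addrACA -opprD -!PoszD; apply: key_int.
rewrite !Nat2Z.inj_add !tn; lia.
Qed.

Lemma fZM x y : fZ (x * y) = fZ x * fZ y.
Proof.
rewrite /fZ mulrBl !mulrBr opprB addrA -!PoszM.

rewrite (_ : forall a b c d : int, a - b + c - d = (a + c) - (b + d)); last first.
  by move=> a b c d; rewrite opprD addrA [a + c - b]addrAC.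
rewrite -!PoszD.
apply: key_int.
rewrite !Nat2Z.inj_add !Nat2Z.inj_mul !tn.
have hx : (Z.max 0 x - Z.max 0 (-x) = x)%ZZ by lia.
have hy : (Z.max 0 y - Z.max 0 (-y) = y)%ZZ by lia.
have hxy : (Z.max 0 (x*y) - Z.max 0 (-(x*y)) = x*y)%ZZ by lia.
rewrite hxy -{1}hx -{1}hy. ring.
Qed.

Lemma fZ0 : fZ 0 = 0. Proof. by []. Qed.
Lemma fZN x : fZ (- x) = - fZ x.
Proof. apply/eqP; rewrite -addr_eq0 -fZD. by rewrite Z.add_opp_diag_l. Qed.

Lemma fZnat n : fZ (Z.of_nat n) = n%:Z.
Proof.
rewrite /fZ Nat2Z.id.
have -> : Z.to_nat (- Z.of_nat n) = 0%N by lia.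
by rewrite subr0.
Qed.

Definition gZ (a : int) : Z :=
  match a with Posz n => Z.of_nat n | Negz n => (- Z.of_nat n.+1)%ZZ end.

Lemma fgZ a : fZ (gZ a) = a.
Proof. case: a => n; [exact: fZnat | ]. by rewrite /gZ fZN fZnat NegzE. Qed.

Lemma fZ_eq0 z : fZ z = 0 -> z = 0%ZZ.
Proof.
rewrite /fZ => /eqP; rewrite subr_eq0 => /eqP [] h.
have := f_equal Z.of_nat h; rewrite !tn; lia.
Qed.


Section M.
Variable F : fieldType.
Definition zF (z : Z) : F := (fZ z)%:~R.
Lemma zFD x y : zF (x + y) = zF x + zF y. Proof. by rewrite /zF fZD intrD. Qed.
Lemma zFM x y : zF (x * y) = zF x * zF y. Proof. by rewrite /zF fZM intrM. Qed.
Lemma zFN x : zF (- x) = - zF x. Proof. by rewrite /zF fZN intrN. Qed.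
Lemma zFnat n : zF (Z.of_nat n) = n%:R. Proof. by rewrite /zF fZnat. Qed.

Lemma mul_mx2 (a b c d a' b' c' d' : F) :
  mx2 a b c d *m mx2 a' b' c' d' =
  mx2 (a*a'+b*c') (a*b'+b*d') (c*a'+d*c') (c*b'+d*d').
Proof.
apply/matrixP => i j; rewrite !mxE !big_ord_recl big_ord0 addr0 !mxE.
by case: i => [[|[|i]] Hi]; case: j => [[|[|j]] Hj].
Qed.

Lemma add_mx2 (a b c d a' b' c' d' : F) :
  mx2 a b c d + mx2 a' b' c' d' = mx2 (a+a') (b+b') (c+c') (d+d').
Proof.
apply/matrixP => i j; rewrite !mxE.
by case: i => [[|[|i]] Hi]; case: j => [[|[|j]] Hj].
Qed.

Lemma scale_mx2 (k a b c d : F) :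
  k *: mx2 a b c d = mx2 (k*a) (k*b) (k*c) (k*d).
Proof.
apply/matrixP => i j; rewrite !mxE.
by case: i => [[|[|i]] Hi]; case: j => [[|[|j]] Hj].
Qed.

Lemma tr_mx2 (a b c d : F) : \tr (mx2 a b c d) = a + d.
Proof. by rewrite /mxtrace !big_ord_recl big_ord0 addr0 !mxE. Qed.

Lemma one_mx2 : (1%:M : 'M[F]_2) = mx2 1 0 0 1.
Proof.
apply/matrixP => i j; rewrite !mxE.
by case: i => [[|[|i]] Hi]; case: j => [[|[|j]] Hj].
Qed.

Definition MZ (p q r s : Z) := mx2 (zF p) (zF q) (zF r) (zF s).

Lemma mulMZ p q r s p' q' r' s' :
  MZ p q r s *m MZ p' q' r' s' =
  MZ (p * p' + q * r') (p * q' + q * s') (r * p' + s * r') (r * q' + s * s').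
Proof. by rewrite /MZ mul_mx2 !zFD !zFM. Qed.
Lemma addMZ p q r s p' q' r' s' :
  MZ p q r s + MZ p' q' r' s' = MZ (p+p') (q+q') (r+r') (s+s').
Proof. by rewrite /MZ add_mx2 !zFD. Qed.
Lemma scaleMZ k p q r s : zF k *: MZ p q r s = MZ (k * p) (k * q) (k * r) (k * s).
Proof. by rewrite /MZ scale_mx2 !zFM. Qed.
Lemma oppMZ p q r s : - MZ p q r s = MZ (-p) (-q) (-r) (-s).
Proof.
rewrite -scaleN1r (_ : -1 = zF (-1)); last by rewrite (_ : (-1)%ZZ = Z.opp 1) // zFN (zFnat 1).
by rewrite scaleMZ; congr MZ; lia.
Qed.
Lemma trMZ p q r s : \tr (MZ p q r s) = zF (p + s).
Proof. by rewrite tr_mx2 zFD. Qed.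
Lemma MZ_ext p q r s p' q' r' s' :
  p = p' -> q = q' -> r = r' -> s = s' -> MZ p q r s = MZ p' q' r' s'.
Proof. by move=> -> -> -> ->. Qed.

Lemma zF0 : zF 0 = 0. Proof. by rewrite (zFnat 0). Qed.
Lemma zF1 : zF 1 = 1. Proof. by rewrite (zFnat 1). Qed.
Lemma zF2 : zF 2 = 2. Proof. by rewrite (zFnat 2). Qed.
Lemma zFm1 : zF (-1) = -1. Proof. by rewrite (_ : (-1)%ZZ = Z.opp 1) // zFN zF1. Qed.
Lemma zFm2 : zF (-2) = -2. Proof. by rewrite (_ : (-2)%ZZ = Z.opp 2) // zFN zF2. Qed.

Lemma eqxE : eqx F = MZ 1 0 0 (-1). Proof. by rewrite /MZ zF0 zF1 zFm1. Qed.
Lemma eqyE : eqy F = MZ (-1) 2 0 1. Proof. by rewrite /MZ zF0 zF1 zFm1 zF2. Qed.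
Lemma eqzE : eqz F = MZ (-1) 0 (-2) 1. Proof. by rewrite /MZ zF0 zF1 zFm1 zFm2. Qed.
Lemma xsE : xs F = MZ 1 (-1) 1 (-1). Proof. by rewrite /MZ zF1 zFm1. Qed.
Lemma ysE : ys F = MZ 0 0 1 0. Proof. by rewrite /MZ zF0 zF1. Qed.
Lemma zsE : zs F = MZ 0 (-1) 0 0. Proof. by rewrite /MZ zF0 zFm1. Qed.
Lemma oneE : (1%:M : 'M[F]_2) = MZ 1 0 0 1. Proof. by rewrite /MZ zF0 zF1 one_mx2. Qed.
Lemma zeroE : (0 : 'M[F]_2) = MZ 0 0 0 0.
Proof.
rewrite /MZ zF0; apply/matrixP => i j; rewrite !mxE.
by case: i => [[|[|i]] Hi]; case: j => [[|[|j]] Hj].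
Qed.

Definition V (a b c : Z) : 'M[F]_2 := zF a *: eqx F + zF b *: eqy F + zF c *: eqz F.
Lemma VE a b c : V a b c = MZ (a - b - c) (2*b) (-2*c) (-a+b+c).
Proof.
rewrite /V eqxE eqyE eqzE !scaleMZ !addMZ; apply: MZ_ext; lia.
Qed.
End M.


Section M.
Variable F : fieldType.
Hypothesis charF0 : [pchar F] =i pred0.

Lemma two_neq0 : (2%:R : F) != 0.
Proof. by rewrite ((pcharf0P F).1 charF0 2). Qed.

Lemma expad_conj (n u : 'M[F]_2) : n *m n = 0 ->
  expad n u = (1%:M + n) *m u *m (1%:M - n).
Proof.
move=> nn.
rewrite /expad !big_ord_recl big_ord0 addr0 /=.
rewrite /ad.
rewrite (_ : 0`! = 1)%N // (_ : (bump 0 0)`! = 1)%N // (_ : (bump 0 (bump 0 0))`! = 2)%N //.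
rewrite invr1 !scale1r.
have h3 : n *m (n *m u - u *m n) - (n *m u - u *m n) *m n = - (n *m u *m n *+ 2).
  rewrite mulmxBr mulmxBl !mulmxA nn mul0mx -!mulmxA nn mulmx0 sub0r subr0.
  by rewrite -opprD mulmxA.
rewrite h3 -scaler_nat scalerN scalerA mulVf ?two_neq0 // scale1r.
rewrite mulmxDl mul1mx mulmxBr !mulmx1 mulmxDl opprD !addrA.
done.
Qed.

Lemma xsxs : xs F *m xs F = 0.
Proof. by rewrite xsE mulMZ zeroE; apply: MZ_ext; lia. Qed.
Lemma ysys : ys F *m ys F = 0.
Proof. by rewrite ysE mulMZ zeroE; apply: MZ_ext; lia. Qed.
Lemma zszs : zs F *m zs F = 0.
Proof. by rewrite zsE mulMZ zeroE; apply: MZ_ext; lia. Qed.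

Lemma expX a b c : expad (xs F) (V F a b c) = V F a (2*a+2*b-c) b.
Proof.
rewrite expad_conj ?xsxs // !VE xsE oneE oppMZ !addMZ !mulMZ.
apply: MZ_ext; ring.
Qed.
Lemma expY a b c : expad (ys F) (V F a b c) = V F c b (2*b+2*c-a).
Proof.
rewrite expad_conj ?ysys // !VE ysE oneE oppMZ !addMZ !mulMZ.
apply: MZ_ext; ring.
Qed.
Lemma expZ a b c : expad (zs F) (V F a b c) = V F (2*a-b+2*c) a c.
Proof.
rewrite expad_conj ?zszs // !VE zsE oneE oppMZ !addMZ !mulMZ.
apply: MZ_ext; ring.
Qed.

Definition Qf (a b c : Z) : Z := (a*a+b*b+c*c-2*a*b-2*b*c-2*c*a)%ZZ.

Lemma trV a b c : trform (V F a b c) (V F a b c) = zF F (2 * Qf a b c).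
Proof. rewrite /trform VE mulMZ trMZ /Qf; congr zF; ring. Qed.

Lemma expad_inj (n u v : 'M[F]_2) : n *m n = 0 -> expad n u = expad n v -> u = v.
Proof.
move=> nn; rewrite !expad_conj // => h.
have K w : (1%:M - n) *m ((1%:M + n) *m w *m (1%:M - n)) *m (1%:M + n) = w.
  rewrite !mulmxA -[(1%:M - n) *m (1%:M + n)]/((1%:M - n) *m (1%:M + n)).
  have e : (1%:M - n) *m (1%:M + n) = 1%:M :> 'M[F]_2.
    by rewrite mulmxBl !mulmxDr !mul1mx !mulmx1 nn addr0 addrK.
  have e' : (1%:M + n) *m (1%:M - n) = 1%:M :> 'M[F]_2.
    by rewrite mulmxDl !mulmxBr !mul1mx !mulmx1 nn subr0 addrNK.
  by rewrite e mul1mx -mulmxA e mulmx1.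
by rewrite -(K u) h K.
Qed.
End M.


Lemma descpos (a b c : Z) : (0 <= a)%ZZ -> (0 <= b)%ZZ -> (0 < c)%ZZ ->
  (a <= c)%ZZ -> (b <= c)%ZZ -> Qf a b c = 1%ZZ -> (1 < a + b + c)%ZZ ->
  (0 < a + b < c)%ZZ.
Proof.
rewrite /Qf => ha hb hc hac hbc hQ hm.
have e : (c * (2*a + 2*b - c) = (a - b)*(a-b) - 1)%ZZ by nia.
split.
- case: (Z.eq_dec (a + b) 0) => h; last by lia.
  have ea : a = 0%ZZ by lia.
  have eb : b = 0%ZZ by lia.
  subst a b. nia.
- case: (Z_lt_le_dec (a + b) c) => // h.
  have h1 : (c * c <= c * (2*a + 2*b - c))%ZZ by nia.
  have h2 : ((a - b) * (a - b) <= c * c)%ZZ by nia.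
  lia.
Qed.

Lemma desc (a b c : Z) : Qf a b c = 1%ZZ -> (Z.abs a <= Z.abs c)%ZZ ->
  (Z.abs b <= Z.abs c)%ZZ -> (1 < Z.abs a + Z.abs b + Z.abs c)%ZZ ->
  (Z.abs a + Z.abs b + Z.abs (2*a+2*b-c) < Z.abs a + Z.abs b + Z.abs c)%ZZ.
Proof.
move=> hQ h1 h2 h3.
have hab : (0 <= a * b)%ZZ by move: hQ; rewrite /Qf; nia.
have hbc : (0 <= b * c)%ZZ by move: hQ; rewrite /Qf; nia.
have hca : (0 <= c * a)%ZZ by move: hQ; rewrite /Qf; nia.
case: (Z_lt_le_dec 0 c) => hc.
  have ha : (0 <= a)%ZZ by nia.
  have hb : (0 <= b)%ZZ by nia.
  have := @descpos a b c ha hb hc ltac:(lia) ltac:(lia) hQ ltac:(lia); lia.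
case: (Z.eq_dec c 0) => hc0; first by lia.
have ha : (0 <= - a)%ZZ by nia.
have hb : (0 <= - b)%ZZ by nia.
have hc' : (0 < - c)%ZZ by lia.
have hQ' : Qf (-a) (-b) (-c) = 1%ZZ by rewrite -hQ /Qf; ring.
have := @descpos (-a) (-b) (-c) ha hb hc' ltac:(lia) ltac:(lia) hQ' ltac:(lia); lia.
Qed.


Lemma small (a b c : Z) : (Z.abs a + Z.abs b + Z.abs c <= 1)%ZZ -> (a = 0 /\ b = 0 /\ c = 0 \/ a = 1 /\ b = 0 /\ c = 0 \/
          a = -1 /\ b = 0 /\ c = 0 \/ a = 0 /\ b = 1 /\ c = 0 \/
          a = 0 /\ b = -1 /\ c = 0 \/ a = 0 /\ b = 0 /\ c = 1 \/
          a = 0 /\ b = 0 /\ c = -1)%ZZ.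
Proof.
intros.
assert (a = 0 \/ a = 1 \/ a = -1)%ZZ by lia; assert (b = 0 \/ b = 1 \/ b = -1)%ZZ by lia; assert (c = 0 \/ c = 1 \/ c = -1)%ZZ by lia.
intuition (subst; lia).
Qed.

Section O.
Variable F : fieldType.
Hypothesis charF0 : [pchar F] =i pred0.

Lemma V_ext a b c a' b' c' : a = a' -> b = b' -> c = c' -> V F a b c = V F a' b' c'.
Proof. by move=> -> -> ->. Qed.

Lemma stX a b c a' b' c' : Gorbit (V F a b c) ->
  a' = a -> b' = (2*a+2*b-c)%ZZ -> c' = b -> Gorbit (V F a' b' c').
Proof.
move=> h -> -> ->; rewrite -expX //; apply: Gorbit_fwd => //; by left.
Qed.
Lemma stY a b c a' b' c' : Gorbit (V F a b c) ->
  a' = c -> b' = b -> c' = (2*b+2*c-a)%ZZ -> Gorbit (V F a' b' c').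
Proof.
move=> h -> -> ->; rewrite -expY //; apply: Gorbit_fwd => //; by right; left.
Qed.
Lemma stZ a b c a' b' c' : Gorbit (V F a b c) ->
  a' = (2*a-b+2*c)%ZZ -> b' = a -> c' = c -> Gorbit (V F a' b' c').
Proof.
move=> h -> -> ->; rewrite -expZ //; apply: Gorbit_fwd => //; by right; right.
Qed.
Lemma stXi a b c a' b' c' : Gorbit (V F a b c) ->
  a = a' -> b = (2*a'+2*b'-c')%ZZ -> c = b' -> Gorbit (V F a' b' c').
Proof.
move=> h ea eb ec; subst a b c; apply: (@Gorbit_inv _ (xs F)); first by left.
by rewrite expX.
Qed.
Lemma stYi a b c a' b' c' : Gorbit (V F a b c) ->
  a = c' -> b = b' -> c = (2*b'+2*c'-a')%ZZ -> Gorbit (V F a' b' c').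
Proof.
move=> h ea eb ec; subst a b c; apply: (@Gorbit_inv _ (ys F)); first by right; left.
by rewrite expY.
Qed.
Lemma stZi a b c a' b' c' : Gorbit (V F a b c) ->
  a = (2*a'-b'+2*c')%ZZ -> b = a' -> c = c' -> Gorbit (V F a' b' c').
Proof.
move=> h ea eb ec; subst a b c; apply: (@Gorbit_inv _ (zs F)); first by right; right.
by rewrite expZ.
Qed.

Lemma G100 : Gorbit (V F 1 0 0).
Proof.
rewrite /V zF1 zF0 scale1r !scale0r !addr0; exact: Gorbit_base.
Qed.

Lemma reach n : forall a b c, Z.to_nat (Z.abs a + Z.abs b + Z.abs c) = n ->
  Qf a b c = 1%ZZ -> Gorbit (V F a b c).
Proof.
induction n as [n IH] using lt_wf_ind => a b c hn hQ.
case: (Z_le_gt_dec (Z.abs a + Z.abs b + Z.abs c) 1) => hm.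
  have : (a = 0 /\ b = 0 /\ c = 0 \/ a = 1 /\ b = 0 /\ c = 0 \/
          a = -1 /\ b = 0 /\ c = 0 \/ a = 0 /\ b = 1 /\ c = 0 \/
          a = 0 /\ b = -1 /\ c = 0 \/ a = 0 /\ b = 0 /\ c = 1 \/
          a = 0 /\ b = 0 /\ c = -1)%ZZ by exact: small.
  move=> hd; move: hQ; case: hd => [[-> [-> ->]]|[[-> [-> ->]]|[[-> [-> ->]]|[[-> [-> ->]]|[[-> [-> ->]]|[[-> [-> ->]]|[-> [-> ->]]]]]]]].
  - by rewrite /Qf; lia.
  - move=> _; exact: G100.
  - move=> _; apply: (@stZ 0 1 0); try lia.
    apply: (@stZ 1 2 0); try lia.
    apply: (@stX _ _ _ _ _ _ G100); lia.
  - move=> _; apply: (@stZ 1 2 0); try lia.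
    apply: (@stX _ _ _ _ _ _ G100); lia.
  - move=> _; apply: (@stZi _ _ _ _ _ _ G100); lia.
  - move=> _; apply: (@stYi 1 0 2); try lia.
    apply: (@stXi _ _ _ _ _ _ G100); lia.
  - move=> _; apply: (@stY _ _ _ _ _ _ G100); lia.
have hQs : Qf b c a = 1%ZZ by rewrite -hQ /Qf; ring.
have hQt : Qf a c b = 1%ZZ by rewrite -hQ /Qf; ring.
case: (Z_le_gt_dec (Z.abs a) (Z.abs c)) => h1;
  case: (Z_le_gt_dec (Z.abs b) (Z.abs c)) => h2.
- apply: (@stXi a (2*a+2*b-c)%ZZ b); try lia.
  apply: (IH (Z.to_nat (Z.abs a + Z.abs (2*a+2*b-c) + Z.abs b)) _ _ _ _ erefl).
    have := @desc a b c hQ h1 h2 ltac:(lia); lia.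
  by rewrite -hQ /Qf; ring.
- apply: (@stZi (2*a-b+2*c)%ZZ a c); try lia.
  apply: (IH (Z.to_nat (Z.abs (2*a-b+2*c) + Z.abs a + Z.abs c)) _ _ _ _ erefl).
    have := @desc a c b hQt ltac:(lia) ltac:(lia) ltac:(lia); lia.
  by rewrite -hQ /Qf; ring.
- case: (Z_le_gt_dec (Z.abs b) (Z.abs a)) => h3.
  + apply: (@stYi c b (2*b+2*c-a)%ZZ); try lia.
    apply: (IH (Z.to_nat (Z.abs c + Z.abs b + Z.abs (2*b+2*c-a))) _ _ _ _ erefl).
      have := @desc b c a hQs ltac:(lia) ltac:(lia) ltac:(lia); lia.
    by rewrite -hQ /Qf; ring.
  + lia.
- case: (Z_le_gt_dec (Z.abs b) (Z.abs a)) => h3.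
  + apply: (@stYi c b (2*b+2*c-a)%ZZ); try lia.
    apply: (IH (Z.to_nat (Z.abs c + Z.abs b + Z.abs (2*b+2*c-a))) _ _ _ _ erefl).
      have := @desc b c a hQs ltac:(lia) ltac:(lia) ltac:(lia); lia.
    by rewrite -hQ /Qf; ring.
  + apply: (@stZi (2*a-b+2*c)%ZZ a c); try lia.
    apply: (IH (Z.to_nat (Z.abs (2*a-b+2*c) + Z.abs a + Z.abs c)) _ _ _ _ erefl).
      have := @desc a c b hQt ltac:(lia) ltac:(lia) ltac:(lia); lia.
    by rewrite -hQ /Qf; ring.
Qed.
End O.


Lemma intr_eq0F (F : fieldType) (charF0 : [pchar F] =i pred0) (k : int) :
  (k%:~R : F) = 0 -> k = 0.
Proof.
case: k => n.
  rewrite /intmul /= => /eqP; rewrite ((pcharf0P F).1 charF0 n) => /eqP -> //.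
rewrite NegzE intrN => /eqP; rewrite oppr_eq0 ((pcharf0P F).1 charF0 n.+1) //.
Qed.

Theorem theorem4p11 (F : fieldType) (charF0 : [pchar F] =i pred0) :
  forall u : 'M[F]_2, Gorbit u <-> (inL u /\ trform u u = 2).
Proof.
move=> u; split.
  have P : forall v : 'M[F]_2, Gorbit v -> exists a b c, v = V F a b c /\ Qf a b c = 1%ZZ.
    move=> v; elim.
    - exists 1%ZZ, 0%ZZ, 0%ZZ; split => //.
      by rewrite /V zF1 zF0 scale1r !scale0r !addr0.
    - move=> n w [->|[->|->]] _ [a [b [c [-> hQ]]]].
      + exists a, (2*a+2*b-c)%ZZ, b; split; first exact: expX.
        by rewrite -hQ /Qf; ring.
      + exists c, b, (2*b+2*c-a)%ZZ; split; first exact: expY.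
        by rewrite -hQ /Qf; ring.
      + exists (2*a-b+2*c)%ZZ, a, c; split; first exact: expZ.
        by rewrite -hQ /Qf; ring.
    - move=> n w [->|[->|->]] _ [a [b [c [hw hQ]]]].
      + exists a, c, (2*a-b+2*c)%ZZ; split; last by rewrite -hQ /Qf; ring.
        apply: (@expad_inj F charF0 (xs F)); first exact: xsxs.
        rewrite hw (@expX F charF0); apply: V_ext; lia.
      + exists (2*a+2*b-c)%ZZ, b, a; split; last by rewrite -hQ /Qf; ring.
        apply: (@expad_inj F charF0 (ys F)); first exact: ysys.
        rewrite hw (@expY F charF0); apply: V_ext; lia.
      + exists b, (2*b+2*c-a)%ZZ, c; split; last by rewrite -hQ /Qf; ring.
        apply: (@expad_inj F charF0 (zs F)); first exact: zszs.
        rewrite hw (@expZ F charF0); apply: V_ext; lia.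
  move=> /P [a [b [c [-> hQ]]]]; split.
    by exists (fZ a), (fZ b), (fZ c).
  by rewrite trV hQ zF2.
case=> [[a [b [c ->]]] htr].
rewrite -[a]fgZ -[b]fgZ -[c]fgZ in htr *.
change (Gorbit (V F (gZ a) (gZ b) (gZ c))).
change (trform (V F (gZ a) (gZ b) (gZ c)) (V F (gZ a) (gZ b) (gZ c)) = 2) in htr.
apply: (@reach F charF0 _ _ _ _ erefl).
move: htr; rewrite trV -zF2 => /eqP; rewrite -subr_eq0 -zFN -zFD => /eqP.
move/(@intr_eq0F F charF0)/fZ_eq0; lia.
Qed.
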